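(* Let $R$ be a ring with identity, let ${}_RM$ be a finitely generated semisimple left $R$-module and let $\varphi:M\to M$ be a nilpotent $R$-endomorphism. If $\{x_{\gamma,i}\mid\gamma\in\Gamma,1\le i\le k_\gamma\}$ and $\{y_{\delta,j}\mid\delta\in\Delta,1\le j\le l_\delta\}$ are nilpotent Jordan normal bases of ${}_RM$ with respect to $\varphi$, then there exists a bijection $\pi:\Gamma\to\Delta$ such that $k_\gamma=l_{\pi(\gamma)}$ for all $\gamma\in\Gamma$. Thus the sizes of the blocks of a nilpotent Jordan normal base are unique up to a permutation of the blocks.
   Context: For an $R$-endomorphism $\varphi$ of a left $R$-module ${}_RM$, a subset $\{x_{\gamma,i}\mid\gamma\in\Gamma,1\le i\le k_\gamma\}\subseteq M$ (with integers $k_\gamma\ge1$) is a nilpotent Jordan normal base of ${}_RM$ with respect to $\varphi$ if each submodule $Rx_{\gamma,i}$ is simple, $M=\bigoplus_{\gamma\in\Gamma,1\le i\le k_\gamma}Rx_{\gamma,i}$ is a direct sum, $\varphi(x_{\gamma,i})=x_{\gamma,i+1}$ for $1\le i<k_\gamma$, $\varphi(x_{\gamma,k_\gamma})=0$, and the set $\{k_\gamma\mid\gamma\in\Gamma\}$ is bounded. $\Gamma$ is the set of blocks and $k_\gamma$ is the size of block $\gamma$. *)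

(* Defs.v *)
From HB Require Import structures.
From mathcomp Require Import all_boot all_order all_algebra.
From Stdlib Require List.
Set Implicit Arguments. Unset Strict Implicit. Unset Printing Implicit Defensive.
Import GRing.Theory.
Local Open Scope ring_scope.

Section ModuleDefs.
Variables (R : pzRingType) (M : lmodType R).

Definition is_submod (N : M -> Prop) : Prop :=
  [/\ N 0, (forall u v, N u -> N v -> N (u + v)) & (forall (r : R) v, N v -> N (r *: v))].

Definition simple_submod (N : M -> Prop) : Prop :=
  [/\ is_submod N, (exists v, N v /\ v <> 0) &
      (forall N' : M -> Prop, is_submod N' -> (forall v, N' v -> N v) ->
         (forall v, N' v -> v = 0) \/ (forall v, N v -> N' v))].

Definition cyclic_submod (x : M) : M -> Prop := fun v => exists r : R, v = r *: x.

Definition fin_gen_mod : Prop :=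
  exists g : seq M, forall m : M, exists r : nat -> R,
    m = \sum_(j < size g) r j *: g`_j.

Definition semisimple_mod : Prop :=
  exists (I : Type) (N : I -> M -> Prop),
    (forall i, simple_submod (N i)) /\
    (forall m : M, exists (s : seq I) (f : I -> M),
        (forall i, List.In i s -> N i (f i)) /\ m = \sum_(i <- s) f i).

Definition nilpotent_endo (phi : M -> M) : Prop :=
  exists n : nat, forall m : M, iter n phi m = 0.

Definition nilpotent_jordan_base (phi : M -> M) (G : Type) (k : G -> nat)
    (x : G -> nat -> M) : Prop :=
  let valid (p : G * nat) := (1 <= p.2 <= k p.1)%N in
  (forall g, 1 <= k g)%N /\
  (forall g i, (1 <= i <= k g)%N -> simple_submod (cyclic_submod (x g i))) /\
  (forall m : M, exists (s : seq (G * nat)) (r : G * nat -> R),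
      (forall p, List.In p s -> valid p) /\
      m = \sum_(p <- s) r p *: x p.1 p.2) /\
  (forall (s : seq (G * nat)) (r : G * nat -> R),
      List.NoDup s -> (forall p, List.In p s -> valid p) ->
      \sum_(p <- s) r p *: x p.1 p.2 = 0 ->
      forall p, List.In p s -> r p *: x p.1 p.2 = 0) /\
  (forall g i, (1 <= i < k g)%N -> phi (x g i) = x g i.+1) /\
  (forall g, phi (x g (k g)) = 0) /\
  (exists K : nat, forall g, (k g <= K)%N).

End ModuleDefs.

(* Main.v *)
Require Import Defs.
From HB Require Import structures.
From mathcomp Require Import all_boot all_order all_algebra.
From Stdlib Require Import ClassicalEpsilon Classical.
From mathcomp Require Import zify.
Set Implicit Arguments. Unset Strict Implicit. Unset Printing Implicit Defensive.
Import GRing.Theory.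
Local Open Scope ring_scope.

Section Lin.
Variables (R : pzRingType) (M : lmodType R).

Definition spn (L : seq M) (v : M) := exists c : M -> R, v = \sum_(w <- L) c w *: w.
Definition indep (L : seq M) := uniq L /\ forall c : M -> R,
  \sum_(w <- L) c w *: w = 0 -> forall w, w \in L -> c w *: w = 0.
Definition simp (L : seq M) := forall v : M, v \in L -> simple_submod (cyclic_submod v).

Lemma cyc_submod (u : M) : is_submod (cyclic_submod u).
Proof.
split; first by exists 0; rewrite scale0r.
- by move=> a b [r ->] [s ->]; exists (r + s); rewrite scalerDl.
- by move=> t b [r ->]; exists (t * r); rewrite scalerA.
Qed.

Lemma simple_nz (v : M) : simple_submod (cyclic_submod v) -> v != 0.
Proof.
case=> _ [u [[r ->] Hu]] _; apply/eqP => E; apply: Hu; by rewrite E scaler0.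
Qed.

Lemma simple_gen (v : M) (r : R) : simple_submod (cyclic_submod v) -> r *: v != 0 ->
  exists s, s *: (r *: v) = v.
Proof.
case=> _ _ H Hr.
have sub : forall u, cyclic_submod (r *: v) u -> cyclic_submod v u.
  by move=> u [s ->]; exists (s * r); rewrite scalerA.
have [Z|A] := H (cyclic_submod (r *: v)) (cyc_submod _) sub.
- by move: Hr; rewrite (Z (r *: v)) ?eqxx //; exists 1; rewrite scale1r.
- have [|s Es] := A v; first by exists 1; rewrite scale1r.
  by exists s; rewrite -Es.
Qed.

Lemma simple_inj (v : M) (f : M -> M) : simple_submod (cyclic_submod v) ->
  f 0 = 0 -> (forall a b, f (a + b) = f a + f b) -> (forall r a, f (r *: a) = r *: f a) ->
  f v != 0 -> forall r, f (r *: v) = 0 -> r *: v = 0.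
Proof.
case=> _ _ H f0 fD fZ fv r fr.
have Hs : is_submod (fun u => cyclic_submod v u /\ f u = 0).
  split; first by split; [exists 0; rewrite scale0r|].
  - by move=> a b [[s ->] Ha] [[t ->] Hb]; split; [exists (s + t); rewrite scalerDl|rewrite fD Ha Hb addr0].
  - by move=> t b [[s ->] Hb]; split; [exists (t * s); rewrite scalerA| rewrite fZ Hb scaler0].
have [Z|A] := H _ Hs (fun u => @proj1 _ _).
- by apply: Z; split => //; exists r.
- have [|_ E] := A v; first by exists 1; rewrite scale1r.
  by rewrite E eqxx in fv.
Qed.

Lemma span0 (L : seq M) : spn L 0.
Proof. by exists (fun _ => 0); rewrite big1 // => w _; rewrite scale0r. Qed.

Lemma spanD (L : seq M) a b : spn L a -> spn L b -> spn L (a + b).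
Proof.
move=> [c ->] [d ->]; exists (fun w => c w + d w).
by rewrite -big_split /=; apply: eq_bigr => w _; rewrite scalerDl.
Qed.

Lemma spanZ (L : seq M) (r : R) a : spn L a -> spn L (r *: a).
Proof.
move=> [c ->]; exists (fun w => r * c w).
by rewrite scaler_sumr; apply: eq_bigr => w _; rewrite scalerA.
Qed.

Lemma spanN (L : seq M) a : spn L a -> spn L (- a).
Proof. by move=> H; rewrite -scaleN1r; apply: spanZ. Qed.

Lemma span_sum (I : Type) (s : seq I) (P : pred I) (F : I -> M) (L : seq M) :
  (forall i, P i -> spn L (F i)) -> spn L (\sum_(i <- s | P i) F i).
Proof.
move=> H; apply: (big_ind (spn L)); [exact: span0| exact: spanD| exact: H].
Qed.

Lemma sum_ind (L : seq M) w : uniq L -> w \in L ->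
  \sum_(u <- L) (if u == w then 1 else 0) *: u = w.
Proof.
move=> uL wL; rewrite (bigD1_seq w) //= eqxx scale1r big1 ?addr0 // => u /negbTE ->.
by rewrite scale0r.
Qed.

Lemma span_mem (L : seq M) w : uniq L -> w \in L -> spn L w.
Proof. by move=> uL wL; exists (fun u => if u == w then 1 else 0); rewrite sum_ind. Qed.

Lemma span_trans (L L' : seq M) v : (forall w, w \in L' -> spn L w) -> spn L' v -> spn L v.
Proof.
move=> H [c ->]; rewrite big_seq; apply: span_sum => w wL; apply: spanZ; exact: H.
Qed.

Lemma span_mono (L L' : seq M) v : uniq L -> {subset L' <= L} -> spn L' v -> spn L v.
Proof. by move=> uL sub; apply: span_trans => w /sub; apply: span_mem. Qed.

Lemma sum_sub (A B : seq M) (F : M -> M) : uniq A -> uniq B -> {subset A <= B} ->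
  \sum_(w <- B) (if w \in A then F w else 0) = \sum_(w <- A) F w.
Proof.
move=> uA uB sAB; rewrite -big_mkcond -big_filter; apply: perm_big.
apply: uniq_perm; [exact: filter_uniq | exact: uA |].
by move=> w; rewrite mem_filter; case wA: (w \in A) => //=; rewrite sAB.
Qed.

Lemma indep_perm (L L' : seq M) : perm_eq L L' -> indep L -> indep L'.
Proof.
move=> pLL' [uL H]; split; first by rewrite -(perm_uniq pLL').
move=> c Hc w wL'; apply: H; last by rewrite (perm_mem pLL').
by rewrite (perm_big _ pLL').
Qed.

Lemma indep_filter (P : pred M) (L : seq M) : indep L -> indep (filter P L).
Proof.
move=> [uL H]; split; first exact: filter_uniq.
move=> c Hc w; rewrite mem_filter => /andP [Pw wL].
have := H (fun u => if P u then c u else 0) _ w wL; rewrite Pw; apply.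
rewrite -[X in _ = X]Hc big_filter [RHS]big_mkcond; apply: eq_bigr => u _.
by case: (P u) => //; rewrite scale0r.
Qed.


Lemma exchange (vs us F : seq M) : indep F -> simp F -> {subset us <= F} ->
  indep (us ++ vs) -> simp vs -> (forall v, v \in vs -> spn F v) ->
  (size vs + size us <= size F)%N.
Proof.
elim: vs us F => [|v vs IH] us F iF sF sub iuv svs spv.
  by rewrite add0n; apply: uniq_leq_size => //; move: iuv => [+ _]; rewrite cats0.
have vvs : v \in v :: vs by rewrite mem_head.
have [c Hv] := spv v vvs.
have vnz : v != 0 := simple_nz (svs v vvs).
have iv' : indep (v :: us ++ vs).
  apply: (indep_perm _ iuv); rewrite -cat1s perm_catCA; exact: perm_refl.
have uF := iF.1.
have uus : uniq us by move: iuv => [+ _]; rewrite cat_uniq => /and3P[].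
have [p [pF pus cp]] : exists p, [/\ p \in F, p \notin us & c p *: p != 0].
  case: (boolP (has (fun p => (p \notin us) && (c p *: p != 0)) F)).
    by move=> /hasP [p pF /andP[pus cp]]; exists p.
  move=> /hasPn H; exfalso.
  have E : v = \sum_(w <- us) c w *: w.
    rewrite Hv -(sum_sub (fun w => c w *: w) uus uF sub); apply: eq_big_seq => w wF.
    case: ifP => // /negbT wus; move: (H w wF); rewrite wus /= negbK => /eqP //.
  have [uv _] := iv'.
  move: uv; rewrite /= mem_cat negb_or cat_uniq => /andP[/andP[vus vvs'] /and3P[_ usvs _]].
  pose d w := if w == v then -1 else if w \in us then c w else 0.
  have Hs : \sum_(w <- v :: us ++ vs) d w *: w = 0.
    rewrite big_cons big_cat /= /d eqxx scaleN1r.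
    rewrite [X in _ + (_ + X)]big1_seq; last first.
      move=> w /andP[_ wvs]; have -> : (w == v) = false.
        by apply/negbTE; apply: contraNneq vvs' => <-.
      have -> : (w \in us) = false by apply/negbTE; apply: (hasPn usvs).
      by rewrite scale0r.
    rewrite addr0 [X in _ + X](eq_big_seq (fun w => c w *: w)); first by rewrite -E addNr.
    move=> w wus; have -> : (w == v) = false.
      by apply/negbTE; apply: contraNneq vus => <-.
    by rewrite wus.
  have := iv'.2 d Hs v (mem_head _ _).
  rewrite /d eqxx scaleN1r => /eqP; rewrite oppr_eq0 => /eqP Hv0.
  by rewrite Hv0 eqxx in vnz.
pose F0 := [seq w <- F | w != p].
have nspan : ~ spn F0 v.
  move=> [e He].
  pose e' w := if w == p then 0 else e w.
  have E : \sum_(w <- F) e' w *: w = v.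
    rewrite He big_filter [RHS]big_mkcond; apply: eq_bigr => w _.
    by rewrite /e'; case: (w == p) => //=; rewrite scale0r.
  have := iF.2 (fun w => c w - e' w) _ p pF.
  rewrite /e' eqxx subr0 => H; move/eqP: cp; apply; apply: H.
  by rewrite -[LHS]/(\sum_(w <- F) (c w - e' w) *: w); under eq_bigr do rewrite scalerBl;
    rewrite sumrB -Hv E subrr.
have uF0 : uniq F0 by apply: filter_uniq.
have vF0 : v \notin F0 by apply/negP => /(span_mem uF0).
have uF' : uniq (v :: F0) by rewrite /= vF0 uF0.
have iF0 : indep F0 by apply: indep_filter.
have iF' : indep (v :: F0).
  split => // d; rewrite big_cons => Hd.
  have dv : d v *: v = 0.
    apply/eqP; apply: contraT => nz.
    have [s Es] := simple_gen (svs v vvs) nz.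
    exfalso; apply: nspan; rewrite -Es; apply: spanZ.
    move/eqP: Hd; rewrite addr_eq0 => /eqP ->; apply: spanN; by exists d.
  rewrite dv add0r in Hd.
  by move=> w; rewrite in_cons => /orP[/eqP ->|]; [|apply: iF0.2].
have sF' : simp (v :: F0).
  move=> w; rewrite in_cons => /orP[/eqP ->|]; first exact: svs.
  by rewrite mem_filter => /andP[_]; apply: sF.
have spanF : forall w, w \in F -> spn (v :: F0) w.
  move=> w wF; case: (eqVneq w p) => [->|wp]; last first.
    by apply: span_mem => //; rewrite in_cons mem_filter wp wF orbT.
  have [s Es] := simple_gen (sF p pF) cp.
  rewrite -Es; apply: spanZ.
  have -> : c p *: p = v - \sum_(w <- F0) c w *: w.
    by rewrite Hv (bigD1_seq p) //= -big_filter addrK.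
  apply: spanD; first by apply: span_mem; rewrite ?mem_head.
  apply: spanN; apply: (span_mono uF'); first by move=> u uF0'; rewrite in_cons uF0' orbT.
  by exists c.
have := IH (v :: us) (v :: F0) iF' sF' _ iv' _ _.
have sF0 : (size F0).+1 = size F.
  rewrite size_filter.
  have := count_predC (pred1 p) F.
  rewrite (count_uniq_mem _ uF) pF => <-; rewrite add1n; congr (_.+1).
rewrite /= -sF0 addnS addSn; apply.
- move=> w; rewrite in_cons => /orP[/eqP ->|wus]; first by rewrite mem_head.
  rewrite in_cons mem_filter sub // andbT; apply/orP; right.
  by apply: contraNneq pus => <-.
- by move=> w wvs; apply: svs; rewrite in_cons wvs orbT.
- by move=> w wvs; apply: (span_trans spanF); apply: spv; rewrite in_cons wvs orbT.
Qed.

End Lin.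

Lemma span_In (R : pzRingType) (M : lmodType R) (I : Type) (s : seq I) (F : I -> M) (r : I -> R) X :
  (forall p, List.In p s -> spn X (F p)) -> spn X (\sum_(p <- s) r p *: F p).
Proof.
elim: s => [|a s IH] H; first by rewrite big_nil; apply: span0.
rewrite big_cons; apply: spanD; first by apply: spanZ; apply: H; left.
by apply: IH => p Hp; apply: H; right.
Qed.

Section Jordan.
Variables (R : pzRingType) (M : lmodType R) (phi : {linear M -> M}) (G : Type)
  (k : G -> nat) (x : G -> nat -> M).
Hypothesis Hk : forall g, (1 <= k g)%N.
Hypothesis Hs : forall g i, (1 <= i <= k g)%N -> simple_submod (cyclic_submod (x g i)).
Hypothesis Hsp : forall m : M, exists (s : seq (G * nat)) (r : G * nat -> R),
      (forall p, List.In p s -> (1 <= p.2 <= k p.1)%N) /\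
      m = \sum_(p <- s) r p *: x p.1 p.2.
Hypothesis Hd : forall (s : seq (G * nat)) (r : G * nat -> R),
      List.NoDup s -> (forall p, List.In p s -> (1 <= p.2 <= k p.1)%N) ->
      \sum_(p <- s) r p *: x p.1 p.2 = 0 ->
      forall p, List.In p s -> r p *: x p.1 p.2 = 0.
Hypothesis Hphi : forall g i, (1 <= i < k g)%N -> phi (x g i) = x g i.+1.
Hypothesis Hphik : forall g, phi (x g (k g)) = 0.

Definition xp (p : G * nat) := x p.1 p.2.

Lemma xnz g i : (1 <= i <= k g)%N -> x g i != 0.
Proof. by move=> H; apply: simple_nz; apply: Hs. Qed.

Lemma xinj g i h j : (1 <= i <= k g)%N -> (1 <= j <= k h)%N -> x g i = x h j -> g = h /\ i = j.
Proof.
move=> vi vj E.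
case: (classic ((g, i) = (h, j))) => [[-> ->]|NE]; first by [].
pose r (p : G * nat) : R := if excluded_middle_informative (p = (g, i)) then 1 else -1.
have rgi : r (g, i) = 1 by rewrite /r; case: excluded_middle_informative.
have rhj : r (h, j) = -1.
  by rewrite /r; case: excluded_middle_informative => // H; exfalso; apply: NE.
have := @Hd [:: (g, i); (h, j)] r _ _ _ (g, i) _.
rewrite /= rgi scale1r => H; exfalso; move/eqP: (xnz vi); apply; apply: H.
- constructor; last by constructor; [move=> []|constructor].
  by move=> [H|[]]; apply: NE.
- by move=> p [<-|[<-|[]]].
- by rewrite big_cons big_cons big_nil /= rgi rhj scale1r scaleN1r E addr0 subrr.
- by left.
Qed.

Lemma iter0 n : iter n phi 0 = 0.
Proof. by elim: n => //= n ->; rewrite linear0. Qed.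

Lemma iterD n a b : iter n phi (a + b) = iter n phi a + iter n phi b.
Proof. by elim: n => //= n ->; rewrite linearD. Qed.

Lemma iterZ n (r : R) a : iter n phi (r *: a) = r *: iter n phi a.
Proof. by elim: n => //= n ->; rewrite linearZ. Qed.

Lemma iterS_x n g i : (1 <= i <= k g)%N ->
  iter n phi (x g i) = if (i + n <= k g)%N then x g (i + n) else 0.
Proof.
elim: n i => [|n IH] i vi; first by rewrite addn0; case/andP: vi => _ ->.
rewrite iterSr; case: (ltnP i (k g)) => ik.
  rewrite Hphi; last by move: vi => /andP[-> _].
  by rewrite IH ?addSnnS // ik.
have ei : i = k g by apply/eqP; rewrite eqn_leq ik; move: vi => /andP[_ ->].
rewrite ei Hphik iter0; case: ifP => // H; exfalso; move: H; by rewrite -{2}[k g]addn0 leq_add2l.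
Qed.

Lemma in_map_In (s : seq (G * nat)) y : y \in map xp s -> exists p, List.In p s /\ y = xp p.
Proof.
elim: s => [|a s IH] //=; rewrite in_cons => /orP[/eqP ->|/IH [p [Hp ->]]].
  by exists a; split => //; left.
by exists p; split => //; right.
Qed.

Lemma In_map (s : seq (G * nat)) p : List.In p s -> xp p \in map xp s.
Proof. by elim: s => [|a s IH] //= [->|/IH H]; rewrite in_cons ?eqxx // H orbT. Qed.

Lemma uniq_NoDup (s : seq (G * nat)) : uniq (map xp s) -> List.NoDup s.
Proof.
elim: s => [|a s IH] /=; first by constructor.
move=> /andP[na us]; constructor; last exact: IH.
by move=> /In_map H; rewrite H in na.
Qed.

Lemma lift_list (L : seq M) : (forall v, v \in L -> exists p, (1 <= p.2 <= k p.1)%N /\ v = xp p) ->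
  exists s, map xp s = L /\ forall p, List.In p s -> (1 <= p.2 <= k p.1)%N.
Proof.
elim: L => [|a L IH] H; first by exists [::].
have [|s [Es Vs]] := IH; first by move=> v vL; apply: H; rewrite in_cons vL orbT.
have [p [vp Ep]] := H a (mem_head _ _).
by exists (p :: s); split; [rewrite /= Es Ep | move=> q [<-|]; [|apply: Vs]].
Qed.

Definition validX (X : seq M) := forall v, v \in X -> exists p, (1 <= p.2 <= k p.1)%N /\ v = xp p.

Lemma exists_X : fin_gen_mod M -> exists X, [/\ uniq X, validX X & forall m, spn X m].
Proof.
move=> [gs Hg].
have [X [uX vX sX]] : exists X, [/\ uniq X, validX X & forall w, w \in gs -> spn X w].
  elim: gs {Hg} => [|a gs [X' [uX' vX' sX']]]; first by exists [::].
  have [s [r [Vs Ea]]] := Hsp a.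
  exists (undup (X' ++ map xp s)); split; first exact: undup_uniq.
  - move=> v; rewrite mem_undup mem_cat => /orP[/vX' //|/in_map_In [p [Hp ->]]].
    by exists p; split => //; apply: Vs.
  - move=> w; rewrite in_cons => /orP[/eqP ->|wgs].
      rewrite Ea; apply: span_In => p Hp; apply: span_mem; first exact: undup_uniq.
      by rewrite mem_undup mem_cat In_map ?orbT.
    apply: (span_mono (L' := X')); first exact: undup_uniq.
      by move=> u uX; rewrite mem_undup mem_cat uX.
    exact: sX'.
exists X; split => // m; have [r ->] := Hg m.
apply: span_sum => j _; apply: spanZ; apply: sX; exact: mem_nth.
Qed.

Lemma X_cover X : uniq X -> validX X -> (forall m, spn X m) ->
  forall g i, (1 <= i <= k g)%N -> x g i \in X.
Proof.
move=> uX vX sX g i vi; apply: contraT => nX; exfalso.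
have [c Hc] := sX (x g i).
have [s [Es Vs]] := lift_list vX.
pose r (p : G * nat) := if xp p == x g i then -1 else c (xp p).
have := @Hd ((g, i) :: s) r _ _ _ (g, i) _.
  rewrite /r /xp /= eqxx scaleN1r => H; have := xnz vi; rewrite -oppr_eq0 => /eqP; apply; apply: H.
- by apply: uniq_NoDup; rewrite /= Es nX.
- by move=> p [<-|/Vs].
- rewrite big_cons /= eqxx scaleN1r.
  have E2 : \sum_(p <- s) (if x p.1 p.2 == x g i then -1 else c (x p.1 p.2)) *: x p.1 p.2 =
      \sum_(v <- map xp s) (if v == x g i then -1 else c v) *: v by rewrite big_map.
  rewrite E2 Es.
  rewrite [X in _ + X](eq_big_seq (fun v => c v *: v)) -?Hc ?addNr // => v vX'.
  by case: eqP => // E; rewrite -E vX' in nX.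
- by left.
Qed.

Lemma X_indep X : uniq X -> validX X -> indep X.
Proof.
move=> uX vX; split => // c Hc w wX.
have [s [Es Vs]] := lift_list vX.
have [p [Hp ->]] : exists p, List.In p s /\ w = xp p.
  by apply: (@in_map_In s); rewrite Es.
have ND : List.NoDup s by apply: uniq_NoDup; rewrite Es.
have E0 : \sum_(p <- s) c (xp p) *: x p.1 p.2 = 0 by rewrite -[RHS]Hc -Es big_map.
exact: (@Hd s (fun p => c (xp p)) ND Vs E0 p Hp).
Qed.

Fixpoint ordaux (n : nat) (v : M) : nat :=
  match n with 0 => 0%N | n'.+1 => if v == 0 then 0%N else (ordaux n' (phi v)).+1 end.

Lemma ordaux0 n : ordaux n 0 = 0%N.
Proof. by case: n => //= n; rewrite eqxx. Qed.

Lemma ordaux_x N g i : (1 <= i <= k g)%N -> (k g - i < N)%N -> ordaux N (x g i) = (k g - i).+1.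
Proof.
elim: N i => // N IH i vi lt; rewrite /= (negbTE (xnz vi)).
case: (ltnP i (k g)) => ik.
  rewrite Hphi; last by move: vi => /andP[-> _].
  rewrite IH //; [congr (_.+1); lia | lia].
have ei : i = k g by apply/eqP; rewrite eqn_leq ik; move: vi => /andP[_ ->].
by rewrite ei Hphik ordaux0 subnn.
Qed.

Lemma iter_x_eq0 n g i : (1 <= i <= k g)%N -> (iter n phi (x g i) == 0) = ~~ (i + n <= k g)%N.
Proof. by move=> vi; rewrite iterS_x //; case: ifP => H; rewrite ?eqxx // (negbTE (xnz _)) //; lia. Qed.

Definition tops (X : seq M) := [seq v <- X | v \notin map phi X].

Definition JB (X : seq M) := [/\ uniq X, validX X, (forall g i, (1 <= i <= k g)%N -> x g i \in X)
   & forall m, spn X m].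

Lemma tops_char X : JB X -> forall v, v \in tops X <-> exists g, v = x g 1.
Proof.
move=> [uX vX cX sX] v; split.
  rewrite mem_filter => /andP[nphi /vX [[g i] /= [vi Ev]]]; rewrite Ev /xp /= in nphi *.
  exists g; rewrite /xp /=; case: (ltnP 1 i) => i1; last first.
    by have -> : i = 1%N by lia.
  have vi' : (1 <= i.-1 <= k g)%N by lia.
  have : phi (x g i.-1) = x g i by rewrite Hphi; [congr (x g _); lia| lia].
  move=> E; exfalso; move: nphi; rewrite -E (map_f phi) //; exact: cX.
move=> [g ->]; have v1 : (1 <= 1 <= k g)%N by rewrite Hk.
rewrite mem_filter cX // andbT; apply/mapP => [[w /vX [[h j] /= [vj ->]] E]].
move: E; rewrite /xp /= -[phi _]/(iter 1 phi (x h j)) iterS_x //.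
case: ifP => C E; last by move/eqP: (xnz v1); apply.
have vj1 : (1 <= j + 1 <= k h)%N by lia.
by have [_] := xinj v1 vj1 E; lia.
Qed.

Lemma tops_inv X v : JB X -> v \in tops X -> exists g, v = x g 1.
Proof. by move=> HX /(proj1 (tops_char HX v)). Qed.

Lemma tops_x X g : JB X -> x g 1 \in tops X.
Proof. by move=> HX; apply: (proj2 (tops_char HX _)); exists g. Qed.

Lemma count_tops X N j : JB X -> (forall g, k g <= N)%N -> (1 <= j)%N ->
  count (fun v => (iter j phi v == 0) && (iter j.-1 phi v != 0)) X =
  count (fun t => j <= ordaux N t)%N (tops X).
Proof.
move=> HX HN j1; have [uX vX cX sX] := HX.
have ordt : forall g, ordaux N (x g 1) = k g.
  by move=> g; rewrite ordaux_x; [have := Hk g; lia | rewrite Hk | have := HN g; have := Hk g; lia].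
pose f t := iter (ordaux N t - j) phi t.
have fx : forall g, (j <= k g)%N -> f (x g 1) = x g (1 + (k g - j)).
  by move=> g jk; rewrite /f ordt iterS_x ?Hk //; case: ifP => //; lia.
rewrite -!size_filter -(size_map f); apply: perm_size.
apply: uniq_perm; first exact: filter_uniq.
  rewrite map_inj_in_uniq; first by do 2 apply: filter_uniq.
  move=> t t'; rewrite mem_filter => /andP[jt tt]; rewrite mem_filter => /andP[jt' tt'].
  have [g Eg] := tops_inv HX tt; have [h Eh] := tops_inv HX tt'.
  move: jt jt'; rewrite Eg Eh !ordt => jg jh; rewrite !fx //.
  move/xinj => [||-> _] //; lia.
move=> v; rewrite mem_filter; apply/andP/mapP.
  move=> [/andP[P1 P2] /vX [[g i] /= [vi Ev]]].
  move: P1 P2; rewrite Ev /xp /= !iter_x_eq0 // negbK => P1 P2.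
  exists (x g 1); last by rewrite fx; [congr (x g _)|]; lia.
  rewrite mem_filter ordt; apply/andP; split; first lia.
  exact: tops_x.
move=> [t]; rewrite mem_filter => /andP[jt tt] ->; have [g Eg] := tops_inv HX tt.
move: jt; rewrite Eg ordt => jg; rewrite fx //.
have vi : (1 <= 1 + (k g - j) <= k g)%N by lia.
by rewrite !iter_x_eq0 // negbK cX //; split => //; apply/andP; split; lia.
Qed.

Lemma iter_sum (L : seq M) (c : M -> R) n :
  iter n phi (\sum_(w <- L) c w *: w) = \sum_(w <- L) c w *: iter n phi w.
Proof.
elim: L => [|a L IH]; first by rewrite !big_nil iter0.
by rewrite !big_cons iterD iterZ IH.
Qed.

Lemma exists_inv (L : seq M) (f : M -> M) : {in L &, injective f} ->
  exists h : M -> M, {in L, forall v, h (f v) = v}.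
Proof.
elim: L => [|a L IH] inj; first by exists id.
have [|h Hh] := IH; first by move=> u v uL vL; apply: inj; rewrite in_cons ?uL ?vL orbT.
exists (fun u => if u == f a then a else h u) => v; rewrite in_cons => /orP[/eqP ->|vL].
  by rewrite eqxx.
case: eqP => [E|_]; last exact: Hh.
by apply: inj; rewrite ?in_cons ?vL ?eqxx ?orbT.
Qed.

Lemma span_ker X j w : JB X -> iter j phi w = 0 ->
  spn (filter (fun v => iter j phi v == 0) X) w.
Proof.
move=> HX fw; have [uX vX cX sX] := HX.
have iX : indep X := X_indep uX vX.
pose f := iter j phi.
have [c Hc] := sX w.
have Cz : forall v, v \in X -> f v != 0 -> c v *: v = 0.
  pose X' := [seq v <- X | f v != 0].
  have inj : {in X' &, injective f}.
    move=> v v'; rewrite !mem_filter => /andP[nz vX1] /andP[nz' vX1'].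
    have [[g i] /= [vi Ev]] := vX v vX1; have [[h i'] /= [vi' Ev']] := vX v' vX1'.
    move: nz nz'; rewrite Ev Ev' /xp /= /f !iterS_x //.
    case: ifP => C; last by rewrite eqxx.
    case: ifP => C'; last by rewrite eqxx.
    move=> _ _ /xinj [||-> ?]; [lia|lia|congr (x h _); lia].
  have [h Hh] := exists_inv inj.
  have subX : {subset map f X' <= X}.
    move=> u /mapP [v]; rewrite mem_filter => /andP[nz vX1] ->.
    have [[g i] /= [vi Ev]] := vX v vX1.
    move: nz; rewrite Ev /xp /= /f iterS_x //; case: ifP => C; last by rewrite eqxx.
    by move=> _; apply: cX; lia.
  have umap : uniq (map f X') by rewrite map_inj_in_uniq ?filter_uniq.
  pose c'' u := if u \in map f X' then c (h u) else 0.
  have S0 : \sum_(u <- X) c'' u *: u = 0.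
    transitivity (\sum_(u <- X) (if u \in map f X' then c (h u) *: u else 0)).
      by apply: eq_bigr => u _; rewrite /c''; case: ifP; rewrite ?scale0r.
    rewrite (sum_sub (fun u => c (h u) *: u) umap uX subX) big_map.
    rewrite (eq_big_seq (fun v => c v *: f v)); last by move=> v vX'; rewrite Hh.
    rewrite big_filter big_mkcond /=.
    transitivity (\sum_(v <- X) c v *: f v).
      by apply: eq_bigr => v _; case: eqP => // ->; rewrite scaler0.
    by rewrite /f -iter_sum -Hc.
  move=> v vX1 nz.
  have v' : v \in X' by rewrite mem_filter nz vX1.
  have := iX.2 c'' S0 (f v) (subX _ (map_f f v')).
  rewrite /c'' map_f // Hh // => H.
  have [[g i] /= [vi Ev]] := vX v vX1.
  move: nz H; rewrite Ev /xp /= => nz H.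
  apply: (simple_inj (Hs vi) (f := f)) => //.
  - exact: iter0.
  - by move=> a b; apply: iterD.
  - by move=> r a; apply: iterZ.
  - by rewrite /f iterZ.
exists c; rewrite {1}Hc big_filter [RHS]big_mkcond; apply: eq_big_seq => v vX1 /=.
case: eqP => // /eqP nz; exact: Cz.
Qed.

End Jordan.

Lemma count_diff (T : Type) (a b : pred T) (s : seq T) : (forall t, b t -> a t) ->
  (count (fun t => a t && ~~ b t) s + count b s = count a s)%N.
Proof.
move=> ba; elim: s => //= t s <-.
case Bt: (b t); first by rewrite (ba t Bt) /=; lia.
by case: (a t) => /=; lia.
Qed.

Lemma count_eqn (T : Type) (f : T -> nat) n (s : seq T) :
  (count (fun t => f t == n) s + count (fun t => n.+1 <= f t) s = count (fun t => n <= f t) s)%N.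
Proof.
elim: s => //= t s <-.
case: (ltngtP (f t) n) => H /=; lia.
Qed.

Lemma perm_match (T : eqType) (o : T -> nat) (TX TY : seq T) : uniq TX -> uniq TY ->
  perm_eq (map o TX) (map o TY) -> exists f : T -> T,
  [/\ {in TX, forall t, f t \in TY /\ o (f t) = o t}, {in TX &, injective f} &
      forall u, u \in TY -> exists2 t, t \in TX & u = f t].
Proof.
elim: TX TY => [|a TX IH] TY uX uY pXY.
  move: (perm_size pXY); rewrite size_map /=; case: TY {uY} pXY => // _.
  by exists id; split => // u.
have : o a \in map o TY by rewrite -(perm_mem pXY) mem_head.
move=> /mapP [b bY ob].
have pY : perm_eq TY (b :: rem b TY) by apply: perm_to_rem.
have pXY' : perm_eq (map o TX) (map o (rem b TY)).
  rewrite -(perm_cons (o a)); apply: (perm_trans pXY).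
  by rewrite ob; have := perm_map o pY.
move: uX => /= /andP[aX uX].
have uY' : uniq (rem b TY) by apply: rem_uniq.
have [f' [H1 H2 H3]] := IH _ uX uY' pXY'.
exists (fun v => if v == a then b else f' v); split.
- move=> t; rewrite in_cons => /orP[/eqP ->|tX]; first by rewrite eqxx.
  have -> : (t == a) = false by apply/negbTE; apply: contraNneq aX => <-.
  by have [/(mem_rem) ? ?] := H1 t tX.
- move=> t t'; rewrite !in_cons => /orP[/eqP ->|tX] /orP[/eqP ->|tX'] //;
    rewrite ?eqxx.
  + have -> : (t' == a) = false by apply/negbTE; apply: contraNneq aX => <-.
    move=> E; have [] := H1 t' tX'; rewrite -E.
    by rewrite mem_rem_uniqF.
  + have -> : (t == a) = false by apply/negbTE; apply: contraNneq aX => <-.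
    move=> E; have [] := H1 t tX; rewrite E.
    by rewrite mem_rem_uniqF.
  + have -> : (t == a) = false by apply/negbTE; apply: contraNneq aX => <-.
    have -> : (t' == a) = false by apply/negbTE; apply: contraNneq aX => <-.
    exact: H2.
- move=> u uY0; case: (eqVneq u b) => [->|ub].
    by exists a; rewrite ?mem_head ?eqxx.
  have : u \in rem b TY by rewrite (mem_rem_uniq _ uY) inE ub uY0.
  move=> /H3 [t tX ->]; exists t; first by rewrite in_cons tX orbT.
  have -> : (t == a) = false by apply/negbTE; apply: contraNneq aX => <-.
  by [].
Qed.

Unset Implicit Arguments.

Theorem proposition2p2 (R : pzRingType) (M : lmodType R) (phi : {linear M -> M})
    (Gam Del : Type) (k : Gam -> nat) (l : Del -> nat)
    (x : Gam -> nat -> M) (y : Del -> nat -> M) :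
  fin_gen_mod M -> semisimple_mod M -> nilpotent_endo phi ->
  nilpotent_jordan_base phi k x -> nilpotent_jordan_base phi l y ->
  exists pi : Gam -> Del, bijective pi /\ forall g : Gam, k g = l (pi g).
Proof.
move=> fg _ _ [Hk [Hs [Hsp [Hd [Hphi [Hphik [Kx HKx]]]]]]]
  [Hl [Hs' [Hsp' [Hd' [Hphi' [Hphil [Ky HKy]]]]]]].
have [X [uX vX sX]] := exists_X Hsp fg.
have [Y [uY vY sY]] := exists_X Hsp' fg.
have JX : JB k x X by split => //; apply: (X_cover Hs Hd uX vX sX).
have JY : JB l y Y by split => //; apply: (X_cover Hs' Hd' uY vY sY).
have iX := X_indep Hd uX vX.
have iY := X_indep Hd' uY vY.
have simX : simp X by move=> v /vX [p [vp ->]]; apply: Hs.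
have simY : simp Y by move=> v /vY [p [vp ->]]; apply: Hs'.
pose P j (v : M) := iter j phi v == 0.
have le1 : forall j, (count (P j) Y <= count (P j) X)%N.
  move=> j; rewrite -!size_filter -[size (filter _ Y)]addn0.
  apply: (exchange (us := [::])) => //.
  - exact: indep_filter.
  - by move=> v; rewrite mem_filter => /andP[_ /simX].
  - exact: indep_filter.
  - by move=> v; rewrite mem_filter => /andP[_ /simY].
  - move=> v; rewrite mem_filter => /andP[/eqP Pv _].
    exact: (span_ker Hs Hd Hphi Hphik JX Pv).
have le2 : forall j, (count (P j) X <= count (P j) Y)%N.
  move=> j; rewrite -!size_filter -[size (filter _ X)]addn0.
  apply: (exchange (us := [::])) => //.
  - exact: indep_filter.
  - by move=> v; rewrite mem_filter => /andP[_ /simY].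
  - exact: indep_filter.
  - by move=> v; rewrite mem_filter => /andP[_ /simX].
  - move=> v; rewrite mem_filter => /andP[/eqP Pv _].
    exact: (span_ker Hs' Hd' Hphi' Hphil JY Pv).
have eqP_ : forall j, count (P j) X = count (P j) Y.
  by move=> j; apply/eqP; rewrite eqn_leq le1 le2.
pose N := (Kx + Ky)%N.
have HNx : forall g, (k g <= N)%N by move=> g; have := HKx g; lia.
have HNy : forall d, (l d <= N)%N by move=> d; have := HKy d; lia.
pose o := ordaux phi N.
have Pmono : forall j v, (1 <= j)%N -> P j.-1 v -> P j v.
  move=> [|j] v // _; rewrite /P /= => /eqP ->; by rewrite linear0.
have cnt : forall j, (1 <= j)%N ->
    count (fun t => j <= o t)%N (tops phi X) = count (fun t => j <= o t)%N (tops phi Y).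
  move=> j j1.
  rewrite -(count_tops Hk Hs Hd Hphi Hphik JX HNx j1) -(count_tops Hl Hs' Hd' Hphi' Hphil JY HNy j1).
  have := count_diff X (fun v => Pmono j v j1); have := count_diff Y (fun v => Pmono j v j1).
  move=> hY hX; have e1 := eqP_ j; have e2 := eqP_ j.-1; rewrite /P in hX hY e1 e2 *.
rewrite e1 e2 in hX; apply: (@addIn (count (fun v => iter j.-1 phi v == 0) Y)); by rewrite hX hY.
have ox : forall g, o (x g 1) = k g.
  move=> g; rewrite /o (ordaux_x Hs Hphi Hphik); [have := Hk g; lia | by rewrite Hk | have := HNx g; have := Hk g; lia].
have oy : forall d, o (y d 1) = l d.
  move=> d; rewrite /o (ordaux_x Hs' Hphi' Hphil); [have := Hl d; lia | by rewrite Hl | have := HNy d; have := Hl d; lia].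
have pXY : perm_eq (map o (tops phi X)) (map o (tops phi Y)).
  rewrite /perm_eq; apply/allP => n _; apply/eqP; rewrite !count_map.
  case: n => [|n].
    rewrite !(@eq_in_count _ _ pred0) ?count_pred0 //.
      move=> t /(tops_inv Hl Hs' Hd' Hphi' Hphil JY) [dd ->] /=; rewrite oy; have := Hl dd; lia.
    move=> t /(tops_inv Hk Hs Hd Hphi Hphik JX) [gg ->] /=; rewrite ox; have := Hk gg; lia.
  have e1 := count_eqn o n.+1 (tops phi X); have e2 := count_eqn o n.+1 (tops phi Y).
  rewrite (cnt n.+1) // (cnt n.+2) // in e1.
  rewrite -[count _ (tops phi X)]/(count (fun t => o t == n.+1) (tops phi X)).
  rewrite -[count _ (tops phi Y)]/(count (fun t => o t == n.+1) (tops phi Y)).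
  lia.
have [f [F1 F2 F3]] := perm_match (filter_uniq _ uX) (filter_uniq _ uY) pXY.
have v1x : forall g, (1 <= 1 <= k g)%N by move=> g; rewrite Hk.
have v1y : forall d, (1 <= 1 <= l d)%N by move=> d; rewrite Hl.
have H1 : forall g, exists d, y d 1 = f (x g 1).
  move=> g; have [/(tops_inv Hl Hs' Hd' Hphi' Hphil JY) [d Ed] _] :=
    F1 _ (tops_x Hk Hs Hd Hphi Hphik g JX).
  by exists d.
have H2 : forall d, exists g, f (x g 1) = y d 1.
  move=> d; have [t tX Et] := F3 _ (tops_x Hl Hs' Hd' Hphi' Hphil d JY).
  have [g Eg] := tops_inv Hk Hs Hd Hphi Hphik JX tX.
  by exists g; rewrite Et Eg.
pose pi g := proj1_sig (constructive_indefinite_description _ (H1 g)).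
pose pinv d := proj1_sig (constructive_indefinite_description _ (H2 d)).
have Epi : forall g, y (pi g) 1 = f (x g 1).
  by move=> g; rewrite /pi; case: constructive_indefinite_description.
have Epinv : forall d, f (x (pinv d) 1) = y d 1.
  by move=> d; rewrite /pinv; case: constructive_indefinite_description.
exists pi; split.
  exists pinv.
    move=> g; have := Epinv (pi g); rewrite Epi => E.
    have := F2 _ _ (tops_x Hk Hs Hd Hphi Hphik _ JX) (tops_x Hk Hs Hd Hphi Hphik _ JX) E.
    by move/(xinj Hs Hd (v1x _) (v1x _)) => [].
  move=> d; have := Epi (pinv d); rewrite Epinv.
  by move/(xinj Hs' Hd' (v1y _) (v1y _)) => [].
move=> g; rewrite -ox -oy Epi.
have [_ ->] := F1 _ (tops_x Hk Hs Hd Hphi Hphik g JX).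
by [].
Qed.
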